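(* For $d\ge1$ let $\tilde{\mathcal T}_d:[0,1]\to\mathbb R$ be defined by $\tilde{\mathcal T}_d(x)=\frac{1}{d+1}\frac{\partial}{\partial q}F^{(d)}_q(x)\big|_{q=1/(d+1)}$. Then $$\lim_{d\to\infty}\ \sup_{x\in[0,1]}\big|\tilde{\mathcal T}_d(x)-x(1-x)\big|=0.$$
   Context: Fix $d\ge1$. For $q\in(0,1)$ let $t_q\in(0,1)$ be the unique solution in $(0,1)$ of $q^d+q^{d-1}t+\dots+t^d=q^{d-1}$ (so $t_q=q$ when $q=1/(d+1)$). Let $\nu^{(d)}_q$ be the product measure on $\{0,1,\dots,d\}^{\mathbb N}$ with i.i.d. coordinates, $\nu^{(d)}_q(\omega_i=m)=t_q^m/q^{m-1}$ for $m=0,\dots,d$. Let $F^{(d)}_q(x)=\nu^{(d)}_q\big(\{\omega:\sum_{i\ge1}\omega_i(d+1)^{-i}\le x\}\big)$, $x\in[0,1]$. Equivalently, writing $x=\sum_j\omega_j(d+1)^{-j}$ in base $d+1$ and $b=t_q/q$, $F^{(d)}_q(x)=\sum_{j\ge1}\big(\sum_{i=0}^{\omega_j-1}b^i\big)q^jb^{s^1_j+2s^2_j+\dots+ds^d_j-\omega_j}$, where $s^m_j$ is the number of occurrences of $m$ among $\omega_1,\dots,\omega_j$. (For $d=1$, $2\tilde{\mathcal T}_1$ is the Takagi function.) *)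

(* Defs.v *)
From Stdlib Require Import Reals Lra Lia ZArith ClassicalEpsilon.
Open Scope R_scope.

Definition tq (d : nat) (q : R) : R :=
  epsilon (inhabits 0%R)
    (fun t => 0 < t < 1 /\
       sum_f_R0 (fun i => q ^ (d - i) * t ^ i) d = q ^ (d - 1)).

Definition bq (d : nat) (q : R) : R := tq d q / q.

(* j-th base-(d+1) digit of x (j >= 1): greedy expansion for x < 1,
   and the expansion 0.ddd... for x = 1. *)
Definition digit (d : nat) (x : R) (j : nat) : nat :=
  if Rlt_dec x 1 then
    Z.to_nat (Int_part (x * INR (S d) ^ j)
              - Z.of_nat (S d) * Int_part (x * INR (S d) ^ (j - 1)))
  else d.

Fixpoint digsum (d : nat) (x : R) (n : nat) : nat :=
  match n with
  | O => O
  | S n' => (digsum d x n' + digit d x n)%nat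
  end.

Fixpoint geom_part (b : R) (n : nat) : R :=
  match n with
  | O => 0
  | S n' => geom_part b n' + b ^ n'
  end.

(* The j-th term (j = n+1) of the series for F_q^{(d)}(x):
   (sum_{i<omega_j} b^i) q^j b^(s^1_j + 2 s^2_j + ... + d s^d_j - omega_j),
   where s^1_j + ... + d s^d_j - omega_j = omega_1 + ... + omega_{j-1}. *)
Definition Fterm (d : nat) (q x : R) (n : nat) : R :=
  geom_part (bq d q) (digit d x (S n)) * q ^ (S n) * bq d q ^ (digsum d x n).

Definition F (d : nat) (q x : R) : R :=
  epsilon (inhabits 0%R) (fun l => infinite_sum (Fterm d q x) l).

(* Main.v *)
Require Import Defs.
From Stdlib Require Import Reals Lra Lia ZArith ClassicalEpsilon.
From Coquelicot Require Import Coquelicot.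
Open Scope R_scope.


Lemma pow_diff_S (k : nat) (u v W : R) : 0 <= u <= W -> 0 <= v <= W ->
  Rabs (u ^ S k - v ^ S k) <= INR (S k) * Rabs (u - v) * W ^ k.
Proof.
  intros Hu Hv. induction k as [|k IH].
  - simpl. rewrite !Rmult_1_r. lra.
  - replace (u ^ S (S k) - v ^ S (S k)) with (u * (u ^ S k - v ^ S k) + v ^ S k * (u - v))
      by (simpl; ring).
    eapply Rle_trans; [apply Rabs_triang|].
    rewrite !Rabs_mult, (Rabs_right u) by lra.
    rewrite (Rabs_right (v ^ S k)) by (apply Rle_ge, pow_le; lra).
    assert (H1 : v ^ S k <= W ^ S k) by (apply pow_incr; lra).
    assert (H2 : 0 <= W ^ k) by (apply pow_le; lra).
    assert (H3 : 0 <= Rabs (u - v)) by apply Rabs_pos.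
    assert (H4 : u * Rabs (u ^ S k - v ^ S k) <= W * (INR (S k) * Rabs (u - v) * W ^ k)).
    { apply Rmult_le_compat; try lra. apply Rabs_pos. }
    rewrite (S_INR (S k)). simpl in *. nra.
Qed.

Lemma pow1_bound (k : nat) (b B : R) : 0 <= b <= B -> 1 <= B ->
  Rabs (b ^ k - 1) <= INR k * Rabs (b - 1) * B ^ k.
Proof.
  intros Hb HB. destruct k as [|k].
  - simpl. rewrite Rminus_diag, Rabs_R0. lra.
  - replace 1 with (1 ^ S k) at 1 by apply pow1.
    eapply Rle_trans; [apply (pow_diff_S k b 1 B); lra|].
    apply Rmult_le_compat_l.
    + apply Rmult_le_pos; [apply pos_INR|apply Rabs_pos].
    + simpl. assert (0 <= B ^ k) by (apply pow_le; lra). nra.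
Qed.

Lemma geom_part_val b n : geom_part b n * (b - 1) = b ^ n - 1.
Proof. induction n; simpl; [ring|]. rewrite Rmult_plus_distr_r, IHn. ring. Qed.

Lemma geom_part_1 n : geom_part 1 n = INR n.
Proof. induction n; simpl geom_part; [simpl; ring|]. rewrite IHn, pow1, S_INR. ring. Qed.

Lemma geom_part_bound b B n : 0 <= b <= B -> 1 <= B ->
  Rabs (geom_part b n) <= INR n * B ^ n.
Proof.
  intros Hb HB. induction n as [|n IH]; simpl geom_part.
  - rewrite Rabs_R0. simpl; lra.
  - eapply Rle_trans; [apply Rabs_triang|].
    rewrite (Rabs_right (b ^ n)) by (apply Rle_ge, pow_le; lra).
    assert (b ^ n <= B ^ n) by (apply pow_incr; lra).
    assert (B ^ n <= B ^ S n) by (apply Rle_pow; [lra|lia]).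
    assert (0 <= INR n) by apply pos_INR.
    rewrite S_INR. nra.
Qed.

Lemma geom_part_diff b B n : 0 <= b <= B -> 1 <= B ->
  Rabs (geom_part b n - INR n) <= INR n * INR n * Rabs (b - 1) * B ^ n.
Proof.
  intros Hb HB. induction n as [|n IH]; simpl geom_part.
  - simpl. rewrite Rminus_diag, Rabs_R0. lra.
  - replace (geom_part b n + b ^ n - INR (S n)) with ((geom_part b n - INR n) + (b ^ n - 1))
      by (rewrite S_INR; ring).
    eapply Rle_trans; [apply Rabs_triang|].
    pose proof (pow1_bound n b B Hb HB).
    assert (B ^ n <= B ^ S n) by (apply Rle_pow; [lra|lia]).
    assert (0 <= INR n) by apply pos_INR.
    assert (0 <= Rabs (b - 1)) by apply Rabs_pos.
    assert (0 <= B ^ n) by (apply pow_le; lra).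
    rewrite S_INR.
    assert (INR n * INR n * Rabs (b - 1) * B ^ n <= INR n * INR n * Rabs (b - 1) * B ^ S n).
    { apply Rmult_le_compat_l. repeat apply Rmult_le_pos; auto. auto. }
    assert (INR n * Rabs (b - 1) * B ^ n <= INR n * Rabs (b - 1) * B ^ S n).
    { apply Rmult_le_compat_l. repeat apply Rmult_le_pos; auto. auto. }
    assert (0 <= Rabs (b - 1) * B ^ S n) by (apply Rmult_le_pos; lra).
    nra.
Qed.


Definition Gs d b := sum_f_R0 (fun i => b ^ i) d.
Definition Hs d b := sum_f_R0 (fun i => geom_part b i) d.

Lemma G_H d b : Gs d b - INR (S d) = (b - 1) * Hs d b.
Proof.
  unfold Gs, Hs. induction d as [|d IH]; simpl sum_f_R0.
  - simpl. ring.
  - rewrite !Rmult_plus_distr_l, (Rmult_comm (b - 1) (geom_part b d)), geom_part_val.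
    rewrite (S_INR (S d)). rewrite <- IH. ring.
Qed.

Lemma G_ge d b : (1 <= d)%nat -> 1 <= b -> b - 1 <= Gs d b - INR (S d).
Proof.
  intros Hd Hb. induction d as [|d IH]; [lia|].
  destruct d as [|d].
  - unfold Gs; simpl. lra.
  - assert (IH' := IH ltac:(lia)). unfold Gs in *. rewrite tech5.
    assert (1 <= b ^ S (S d)) by (rewrite <- (pow1 (S (S d))); apply pow_incr; lra).
    rewrite (S_INR (S (S d))). lra.
Qed.

Lemma G_le d b : (1 <= d)%nat -> 0 <= b <= 1 -> Gs d b - INR (S d) <= b - 1.
Proof.
  intros Hd Hb. induction d as [|d IH]; [lia|].
  destruct d as [|d].
  - unfold Gs; simpl. lra.
  - assert (IH' := IH ltac:(lia)). unfold Gs in *. rewrite tech5.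
    assert (b ^ S (S d) <= 1) by (rewrite <- (pow1 (S (S d))); apply pow_incr; lra).
    rewrite (S_INR (S (S d))). lra.
Qed.

Lemma G_lip d b : (1 <= d)%nat -> 0 <= b -> Rabs (b - 1) <= Rabs (Gs d b - INR (S d)).
Proof.
  intros Hd Hb. destruct (Rle_dec 1 b).
  - pose proof (G_ge d b Hd r). rewrite !Rabs_right; lra.
  - pose proof (G_le d b Hd ltac:(lra)). rewrite !Rabs_left1; lra.
Qed.

Lemma Hs_1 d : Hs d 1 = INR d * INR (S d) / 2.
Proof.
  unfold Hs. induction d as [|d IH].
  - simpl. lra.
  - rewrite tech5, IH, geom_part_1, (S_INR (S d)), (S_INR d). field.
Qed.

Lemma cont_sum (g : nat -> R -> R) n : (forall i, continuity (g i)) ->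
  continuity (fun t => sum_f_R0 (fun i => g i t) n).
Proof.
  intros Hg. induction n as [|n IH]; simpl.
  - apply Hg.
  - apply (continuity_plus (fun t => sum_f_R0 (fun i => g i t) n) (g (S n))); auto.
Qed.

Lemma sum_ge01 An N : (1 <= N)%nat -> (forall i, 0 <= An i) -> An 0%nat + An 1%nat <= sum_f_R0 An N.
Proof.
  intros HN Hp. induction N as [|N IH]; [lia|].
  destruct N as [|N].
  - simpl. lra.
  - rewrite tech5. specialize (IH ltac:(lia)). pose proof (Hp (S (S N))). lra.
Qed.

Lemma tq_exists d q : (1 <= d)%nat -> 0 < q < 1 ->
  exists t, 0 < t < 1 /\ sum_f_R0 (fun i => q ^ (d - i) * t ^ i) d = q ^ (d - 1).
Proof.
  intros Hd Hq.
  set (f := fun t => sum_f_R0 (fun i => q ^ (d - i) * t ^ i) d - q ^ (d - 1)).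
  assert (Hc : continuity f).
  { unfold f. apply (continuity_minus (fun t => sum_f_R0 (fun i => q ^ (d - i) * t ^ i) d)
       (fun _ => q ^ (d - 1))).
    - apply (cont_sum (fun i t => q ^ (d - i) * t ^ i)). intros i.
      apply (continuity_mult (fun _ => q ^ (d - i)) (fun t => t ^ i)).
      + apply continuity_const. intros x y; reflexivity.
      + apply derivable_continuous, derivable_pow.
    - apply continuity_const. intros x y; reflexivity. }
  assert (Hpos : forall i, 0 < q ^ i) by (intros; apply pow_lt; lra).
  assert (H0 : f 0 < 0).
  { unfold f. destruct d as [|d]; [lia|].
    rewrite decomp_sum by lia. simpl pred.
    rewrite sum_eq_R0.
    - replace (S d - 0)%nat with (S d) by lia. replace (S d - 1)%nat with d by lia.
      simpl. pose proof (Hpos d). nra.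
    - intros i _. simpl. ring. }
  assert (H1 : 0 < f 1).
  { unfold f.
    pose proof (sum_ge01 (fun i => q ^ (d - i) * 1 ^ i) d Hd) as HS.
    simpl in HS. rewrite !Rmult_1_r, Nat.sub_0_r in HS.
    assert (0 < q ^ d) by apply Hpos.
    enough (HH : forall i, 0 <= q ^ (d - i) * 1 ^ i) by (specialize (HS HH); lra).
    intros i. rewrite pow1, Rmult_1_r. left; apply Hpos. }
  destruct (IVT f 0 1 Hc ltac:(lra) H0 H1) as [t [Ht Hft]].
  exists t. split.
  - split; [destruct (Req_dec t 0) as [E|E]; [subst; lra|lra]|].
    destruct (Req_dec t 1) as [E|E]; [subst; lra|lra].
  - unfold f in Hft. lra.
Qed.

Lemma tq_spec d q : (1 <= d)%nat -> 0 < q < 1 ->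
  0 < tq d q < 1 /\ Gs d (bq d q) = / q.
Proof.
  intros Hd Hq.
  assert (HP := epsilon_spec (inhabits 0) (fun t => 0 < t < 1 /\
       sum_f_R0 (fun i => q ^ (d - i) * t ^ i) d = q ^ (d - 1)) (tq_exists d q Hd Hq)).
  fold (tq d q) in HP. destruct HP as [Ht HE]. split; [exact Ht|].
  set (t := tq d q) in *. unfold bq. fold t.
  assert (E : sum_f_R0 (fun i => q ^ (d - i) * t ^ i) d = q ^ d * Gs d (t / q)).
  { unfold Gs. rewrite scal_sum. apply sum_eq. intros i Hi.
    replace t with (q * (t / q)) at 1 by (field; lra).
    rewrite Rpow_mult_distr.
    assert (Hqd : q ^ d = q ^ (d - i) * q ^ i) by (rewrite <- pow_add; f_equal; lia).
    rewrite Hqd. ring. }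
  rewrite E in HE.
  replace d with (S (d - 1)) in HE at 1 by lia. simpl in HE.
  assert (0 < q ^ (d - 1)) by (apply pow_lt; lra).
  apply (Rmult_eq_reg_l (q * q ^ (d - 1))); [|nra].
  transitivity (q ^ (d - 1)); [lra|]. field. lra.
Qed.

Lemma bq_pos d q : (1 <= d)%nat -> 0 < q < 1 -> 0 < bq d q.
Proof. intros Hd Hq. destruct (tq_spec d q Hd Hq) as [Ht _]. unfold bq.
  apply Rdiv_lt_0_compat; lra. Qed.

Definition q0 d := / INR (S d).

Lemma q0_pos d : 0 < q0 d.
Proof. unfold q0. apply Rinv_0_lt_compat, lt_0_INR; lia. Qed.

Lemma q0_le d : (1 <= d)%nat -> q0 d <= / 2.
Proof. intros Hd. unfold q0. apply Rinv_le_contravar; [lra|].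
  replace 2 with (INR 2) by (simpl; lra). apply le_INR; lia. Qed.

Lemma b_lip d q : (1 <= d)%nat -> 0 < q < 1 ->
  Rabs (bq d q - 1) <= Rabs (/ q - / q0 d).
Proof.
  intros Hd Hq. destruct (tq_spec d q Hd Hq) as [_ HG].
  unfold q0. rewrite Rinv_inv, <- HG. apply G_lip; auto.
  left; apply bq_pos; auto.
Qed.

Lemma b_q0 d : (1 <= d)%nat -> bq d (q0 d) = 1.
Proof.
  intros Hd. assert (Hq : 0 < q0 d < 1).
  { split; [apply q0_pos|]. pose proof (q0_le d Hd). lra. }
  pose proof (b_lip d (q0 d) Hd Hq). rewrite Rminus_diag, Rabs_R0 in H.
  pose proof (Rabs_pos (bq d (q0 d) - 1)).
  assert (Rabs (bq d (q0 d) - 1) = 0) by lra.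
  destruct (Rcase_abs (bq d (q0 d) - 1)); [rewrite Rabs_left in H1 | rewrite Rabs_right in H1]; lra.
Qed.


Fixpoint dgeom b n := match n with O => 0 | S n' => dgeom b n' + INR n' * b ^ pred n' end.

Lemma geom_deriv n y : derivable_pt_lim (fun b => geom_part b n) y (dgeom y n).
Proof.
  induction n as [|n IH]; simpl.
  - apply derivable_pt_lim_const.
  - apply (derivable_pt_lim_plus (fun b => geom_part b n) (fun b => b ^ n)); auto.
    apply derivable_pt_lim_pow.
Qed.

Lemma dgeom_1 n : dgeom 1 n = INR n * (INR n - 1) / 2.
Proof. induction n as [|n IH]; simpl dgeom; [simpl; lra|]. rewrite IH, pow1, S_INR. field. Qed.

Lemma geom_cont n : continuity (fun b => geom_part b n).
Proof. intros y. apply derivable_continuous_pt. exists (dgeom y n). apply geom_deriv. Qed.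

Lemma Hs_cont d : continuity (Hs d).
Proof. unfold Hs. apply (cont_sum (fun i b => geom_part b i)). intros i; apply geom_cont. Qed.

Lemma geom_part_nonneg b n : 0 <= b -> 0 <= geom_part b n.
Proof. intros Hb. induction n; simpl geom_part; [lra|]. pose proof (pow_le b n Hb). lra. Qed.

Lemma Hs_ge1 d b : (1 <= d)%nat -> 0 <= b -> 1 <= Hs d b.
Proof.
  intros Hd Hb. unfold Hs. pose proof (sum_ge01 (fun i => geom_part b i) d Hd) as HS.
  simpl in HS. specialize (HS (fun i => geom_part_nonneg b i Hb)). lra.
Qed.

Lemma cont_id x : continuity_pt (fun q => q) x.
Proof. apply derivable_continuous_pt, derivable_pt_id. Qed.

Lemma cont_dom (f g : R -> R) x0 : continuity_pt g x0 ->
  (exists del, 0 < del /\ forall x, Rabs (x - x0) < del -> Rabs (f x - f x0) <= Rabs (g x - g x0)) ->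
  continuity_pt f x0.
Proof.
  intros Hg [del [Hdel Hb]].
  unfold continuity_pt, continue_in, limit1_in, limit_in in *. simpl in *. unfold R_dist in *.
  intros eps Heps. destruct (Hg eps Heps) as [a [Ha Hx]].
  exists (Rmin a del). split; [apply Rmin_pos; lra|].
  intros x [Dx Hxd]. apply Rle_lt_trans with (Rabs (g x - g x0)).
  - apply Hb. eapply Rlt_le_trans; [exact Hxd|apply Rmin_r].
  - apply Hx. split; auto. eapply Rlt_le_trans; [exact Hxd|apply Rmin_l].
Qed.

Lemma b_cont d : (1 <= d)%nat -> continuity_pt (bq d) (q0 d).
Proof.
  intros Hd. pose proof (q0_pos d) as Hq0. pose proof (q0_le d Hd) as Hq0'.
  apply (cont_dom (bq d) Rinv).
  - apply continuity_pt_inv; [apply cont_id|]. unfold id; lra.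
  - exists (q0 d / 2). split; [lra|]. intros x Hx.
    rewrite b_q0 by auto. apply b_lip; auto.
    apply Rabs_def2 in Hx. lra.
Qed.

Definition beta d := - 2 * INR (S d) / INR d.

Lemma b_deriv d : (1 <= d)%nat -> derivable_pt_lim (bq d) (q0 d) (beta d).
Proof.
  intros Hd. pose proof (q0_pos d) as Hq0. pose proof (q0_le d Hd) as Hq0'.
  set (phi := fun q => - / (q * q0 d * Hs d (bq d q))).
  assert (Hphi : continuity_pt phi (q0 d)).
  { unfold phi. apply (continuity_pt_opp (fun q => / (q * q0 d * Hs d (bq d q)))).
    apply (continuity_pt_inv (fun q => q * q0 d * Hs d (bq d q))).
    - apply (continuity_pt_mult (fun q => q * q0 d) (fun q => Hs d (bq d q))).
      + apply (continuity_pt_mult (fun q => q) (fun _ => q0 d)).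
        * apply cont_id.
        * apply continuity_pt_const. intros a b; reflexivity.
      + apply (continuity_pt_comp (bq d) (Hs d)). apply b_cont; auto. apply Hs_cont.
    - rewrite b_q0 by auto. pose proof (Hs_ge1 d 1 Hd ltac:(lra)).
      apply Rgt_not_eq. apply Rmult_gt_0_compat; [nra|lra]. }
  assert (Hv : phi (q0 d) = beta d).
  { unfold phi, beta. rewrite b_q0, Hs_1 by auto. unfold q0.
    assert (0 < INR d) by (apply lt_0_INR; lia). rewrite (S_INR d). field. lra. }
  intros eps Heps.
  unfold continuity_pt, continue_in, limit1_in, limit_in in Hphi. simpl in Hphi. unfold R_dist in Hphi.
  destruct (Hphi eps Heps) as [a [Ha Hx]].
  exists (mkposreal (Rmin a (q0 d / 2)) ltac:(apply Rmin_pos; lra)). simpl.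
  intros h Hh0 Hh.
  assert (Hha : Rabs h < a) by (eapply Rlt_le_trans; [exact Hh|apply Rmin_l]).
  assert (Hhq : Rabs h < q0 d / 2) by (eapply Rlt_le_trans; [exact Hh|apply Rmin_r]).
  apply Rabs_def2 in Hhq.
  assert (Hq : 0 < q0 d + h < 1) by lra.
  destruct (tq_spec d (q0 d + h) Hd Hq) as [_ HG].
  pose proof (G_H d (bq d (q0 d + h))) as HGH. rewrite HG in HGH.
  pose proof (Hs_ge1 d (bq d (q0 d + h)) Hd ltac:(left; apply bq_pos; auto)).
  assert (E : (bq d (q0 d + h) - bq d (q0 d)) / h = phi (q0 d + h)).
  { rewrite b_q0 by auto. unfold phi.
    assert (E2 : bq d (q0 d + h) - 1 = (/ (q0 d + h) - INR (S d)) / Hs d (bq d (q0 d + h)))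
      by (rewrite HGH; field; lra).
    rewrite E2. replace (INR (S d)) with (/ q0 d) by (unfold q0; rewrite Rinv_inv; reflexivity).
    field. repeat split; lra. }
  rewrite E, <- Hv. apply Hx. split; [unfold D_x, no_cond; split; auto; lra|].
  replace (q0 d + h - q0 d) with h by ring. auto.
Qed.


Lemma floor_spec r : IZR (Int_part r) <= r < IZR (Int_part r) + 1.
Proof. pose proof (base_Int_part r). lra. Qed.

Lemma digit_le d x j : 0 <= x <= 1 -> (1 <= j)%nat -> (digit d x j <= d)%nat.
Proof.
  intros Hx Hj. unfold digit. destruct (Rlt_dec x 1) as [Hl|Hl]; [|lia].
  set (m := INR (S d)). set (A := x * m ^ (j - 1)).
  assert (E : x * m ^ j = m * A).
  { unfold A. replace j with (S (j - 1)) at 1 by lia. simpl. ring. }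
  rewrite E. fold A.
  assert (Hm : IZR (Z.of_nat (S d)) = m) by (unfold m; rewrite INR_IZR_INZ; reflexivity).
  pose proof (floor_spec (m * A)) as H1. pose proof (floor_spec A) as H2.
  set (z1 := Int_part (m * A)) in *. set (z2 := Int_part A) in *.
  assert (Hm0 : 0 < m) by (unfold m; apply lt_0_INR; lia).
  assert (L1 : (Z.of_nat (S d) * z2 < z1 + 1)%Z).
  { apply lt_IZR. rewrite plus_IZR, mult_IZR, Hm. nra. }
  assert (L2 : (z1 < Z.of_nat (S d) * z2 + Z.of_nat (S d))%Z).
  { apply lt_IZR. rewrite plus_IZR, mult_IZR, Hm. nra. }
  lia.
Qed.

Lemma Int_part_0 x : 0 <= x < 1 -> Int_part x = 0%Z.
Proof.
  intros Hx. pose proof (floor_spec x).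
  assert (H1 : (Int_part x < 1)%Z) by (apply lt_IZR; simpl; lra).
  assert (H2 : (-1 < Int_part x)%Z) by (apply lt_IZR; simpl; lra).
  lia.
Qed.

Lemma digit1 d x : 0 <= x <= 1 ->
  INR (digit d x 1) * q0 d <= x <= (INR (digit d x 1) + 1) * q0 d.
Proof.
  intros Hx. unfold digit, q0. set (m := INR (S d)).
  assert (Hm0 : 0 < m) by (unfold m; apply lt_0_INR; lia).
  destruct (Rlt_dec x 1) as [Hl|Hl].
  - simpl (1 - 1)%nat. rewrite pow_O, Rmult_1_r, (Int_part_0 x) by lra.
    rewrite Z.mul_0_r, Z.sub_0_r. simpl pow. rewrite Rmult_1_r.
    pose proof (floor_spec (x * m)) as H1.
    assert (Hz : (-1 < Int_part (x * m))%Z).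
    { apply lt_IZR. simpl IZR. assert (0 <= x * m) by nra. lra. }
    assert (Hz' : (0 <= Int_part (x * m))%Z) by lia.
    rewrite INR_IZR_INZ, Z2Nat.id by exact Hz'.
    split.
    + apply (Rmult_le_reg_r m); auto. rewrite Rmult_assoc, Rinv_l by lra. lra.
    + apply (Rmult_le_reg_r m); auto. rewrite Rmult_assoc, Rinv_l by lra. lra.
  - assert (x = 1) by lra. subst x. unfold m. rewrite S_INR.
    assert (0 < INR d + 1) by (pose proof (pos_INR d); lra).
    split; [|right; field; lra].
    apply (Rmult_le_reg_r (INR d + 1)); auto. rewrite Rmult_assoc, Rinv_l; lra.
Qed.

Lemma digsum_le d x n : 0 <= x <= 1 -> (digsum d x n <= d * n)%nat.
Proof.
  intros Hx. induction n as [|n IH]; simpl; [lia|].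
  pose proof (digit_le d x (S n) Hx ltac:(lia)). lia.
Qed.


Lemma prod3 a1 a2 a3 b1 b2 b3 : Rabs (a1 * a2 * a3 - b1 * b2 * b3) <=
  Rabs (a1 - b1) * Rabs a2 * Rabs a3 + Rabs b1 * Rabs (a2 - b2) * Rabs a3
  + Rabs b1 * Rabs b2 * Rabs (a3 - b3).
Proof.
  replace (a1 * a2 * a3 - b1 * b2 * b3) with
    ((a1 - b1) * a2 * a3 + b1 * (a2 - b2) * a3 + b1 * b2 * (a3 - b3)) by ring.
  eapply Rle_trans; [apply Rabs_triang|]. rewrite !Rabs_mult.
  apply Rplus_le_compat_r. eapply Rle_trans; [apply Rabs_triang|]. rewrite !Rabs_mult. lra.
Qed.

Lemma mul3_le a b c A B C : 0 <= a <= A -> 0 <= b <= B -> 0 <= c <= C -> a * b * c <= A * B * C.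
Proof. intros. apply Rmult_le_compat; try apply Rmult_le_compat; try apply Rmult_le_pos; lra. Qed.

Lemma term_bound (d n w s : nat) (q qz b K Q B rho : R) :
  (w <= d)%nat -> (s <= d * n)%nat -> 0 < q -> 0 < qz -> q <= Q -> qz <= Q -> Q <= 1 ->
  0 <= b <= B -> 1 <= B -> B ^ d <= 2 -> Q * B ^ d <= rho -> 0 <= K ->
  Rabs (b - 1) <= K * Rabs (q - qz) ->
  Rabs (geom_part b w * q ^ (S n) * b ^ s - INR w * qz ^ (S n) * 1)
    <= Rabs (q - qz) * ((2 * INR d * INR d * K + INR d) * (INR n + 1) * rho ^ n).
Proof.
  intros Hw HS Hq Hqz HqQ HqzQ HQ1 Hb HB HBd Hrho HK Hlip.
  set (h := Rabs (q - qz)). assert (Hh : 0 <= h) by apply Rabs_pos.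
  set (Bd := B ^ d). assert (HBd0 : 1 <= Bd) by (unfold Bd; rewrite <- (pow1 d); apply pow_incr; lra).
  assert (Hwd : INR w <= INR d) by (apply le_INR; auto).
  assert (Hw0 : 0 <= INR w) by apply pos_INR.
  assert (Hn0 : 0 <= INR n) by apply pos_INR.
  assert (HQn : 0 <= Q ^ n) by (apply pow_le; lra).
  assert (HBdn : 0 <= Bd ^ n) by (apply pow_le; lra).
  assert (HX : Q ^ n * Bd ^ n <= rho ^ n).
  { rewrite <- Rpow_mult_distr. apply pow_incr. split; [|auto]. apply Rmult_le_pos; lra. }
  assert (Hbw : B ^ w <= 2) by (eapply Rle_trans; [apply Rle_pow; [lra|exact Hw]|auto]).
  assert (P1 : Rabs (geom_part b w - INR w) <= 2 * INR d * INR d * K * h).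
  { eapply Rle_trans; [apply (geom_part_diff b B w); auto|].
    assert (0 <= Rabs (b - 1)) by apply Rabs_pos.
    assert (INR w * INR w <= INR d * INR d) by nra.
    assert (Rabs (b - 1) * B ^ w <= K * h * 2).
    { apply Rmult_le_compat; auto; [apply pow_le; lra]. }
    assert (0 <= B ^ w) by (apply pow_le; lra).
    assert (0 <= INR w * INR w) by nra.
    replace (INR w * INR w * Rabs (b - 1) * B ^ w) with ((INR w * INR w) * (Rabs (b - 1) * B ^ w)) by ring.
    replace (2 * INR d * INR d * K * h) with ((INR d * INR d) * (K * h * 2)) by ring.
    apply Rmult_le_compat; auto. apply Rmult_le_pos; auto. }
  assert (P2 : Rabs (q ^ S n) <= Q ^ n).
  { rewrite Rabs_right by (apply Rle_ge, pow_le; lra).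
    apply Rle_trans with (Q ^ S n); [apply pow_incr; lra|]. simpl. nra. }
  assert (P2' : Rabs (qz ^ S n) <= Q ^ n).
  { rewrite Rabs_right by (apply Rle_ge, pow_le; lra).
    apply Rle_trans with (Q ^ S n); [apply pow_incr; lra|]. simpl. nra. }
  assert (P3 : Rabs (b ^ s) <= Bd ^ n).
  { rewrite Rabs_right by (apply Rle_ge, pow_le; lra).
    eapply Rle_trans; [apply pow_incr; exact Hb|]. unfold Bd. rewrite <- pow_mult.
    apply Rle_pow; auto. }
  assert (P4 : Rabs (q ^ S n - qz ^ S n) <= (INR n + 1) * h * Q ^ n).
  { eapply Rle_trans; [apply (pow_diff_S n q qz Q); lra|]. rewrite S_INR. fold h. right; ring. }
  assert (P5 : Rabs (b ^ s - 1) <= INR d * INR n * K * h * Bd ^ n).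
  { eapply Rle_trans; [apply (pow1_bound s b B); auto|].
    assert (HSd : INR s <= INR d * INR n) by (rewrite <- mult_INR; apply le_INR; auto).
    assert (B ^ s <= Bd ^ n) by (unfold Bd; rewrite <- pow_mult; apply Rle_pow; auto).
    replace (INR d * INR n * K * h * Bd ^ n) with ((INR d * INR n) * (K * h) * Bd ^ n) by ring.
    apply mul3_le; repeat split; try apply pos_INR; try apply Rabs_pos; auto;
      try (apply pow_le; lra). }
  eapply Rle_trans; [apply prod3|].
  rewrite (Rabs_right (INR w)) by lra.
  assert (T1 : Rabs (geom_part b w - INR w) * Rabs (q ^ S n) * Rabs (b ^ s)
     <= (2 * INR d * INR d * K * h) * Q ^ n * Bd ^ n).
  { apply mul3_le; repeat split; try apply Rabs_pos; auto. }
  assert (T2 : INR w * Rabs (q ^ S n - qz ^ S n) * Rabs (b ^ s)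
     <= INR d * ((INR n + 1) * h * Q ^ n) * Bd ^ n).
  { apply mul3_le; repeat split; try apply Rabs_pos; auto. }
  assert (T3 : INR w * Rabs (qz ^ S n) * Rabs (b ^ s - 1)
     <= INR d * Q ^ n * (INR d * INR n * K * h * Bd ^ n)).
  { apply mul3_le; repeat split; try apply Rabs_pos; auto. }
  set (X := Q ^ n * Bd ^ n) in *.
  assert (E : 2 * INR d * INR d * K * h * Q ^ n * Bd ^ n + INR d * ((INR n + 1) * h * Q ^ n) * Bd ^ n
     + INR d * Q ^ n * (INR d * INR n * K * h * Bd ^ n)
     = h * X * (2 * INR d * INR d * K + INR d * (INR n + 1) + INR d * INR d * INR n * K))
     by (unfold X; ring).
  assert (Hd0 : 0 <= INR d) by apply pos_INR.
  assert (Hc : 2 * INR d * INR d * K + INR d * (INR n + 1) + INR d * INR d * INR n * K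
      <= (2 * INR d * INR d * K + INR d) * (INR n + 1)).
  { assert (0 <= INR d * INR d * K) by (repeat apply Rmult_le_pos; lra). nra. }
  assert (0 <= X) by (unfold X; apply Rmult_le_pos; lra).
  assert (0 <= 2 * INR d * INR d * K + INR d * (INR n + 1) + INR d * INR d * INR n * K).
  { repeat apply Rplus_le_le_0_compat; repeat apply Rmult_le_pos; lra. }
  assert (h * X * (2 * INR d * INR d * K + INR d * (INR n + 1) + INR d * INR d * INR n * K)
      <= h * ((2 * INR d * INR d * K + INR d) * (INR n + 1) * rho ^ n)).
  { rewrite Rmult_assoc. apply Rmult_le_compat_l; auto. rewrite Rmult_comm.
    apply Rmult_le_compat; auto. }
  lra.
Qed.


Lemma ex_series_dom (a M : nat -> R) : (forall n, Rabs (a n) <= M n) -> ex_series M -> ex_series a.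
Proof. intros H HM. apply (ex_series_le a M); auto. Qed.

Lemma tail_bound (a M : nat -> R) N : (forall n, Rabs (a n) <= M n) -> ex_series M ->
  Rabs (Series a - sum_f_R0 a N) <= Series M - sum_f_R0 M N.
Proof.
  intros H HM.
  assert (Ha : ex_series a) by (apply (ex_series_dom a M); auto).
  rewrite (Series_incr_n a (S N)) by (auto; lia).
  rewrite (Series_incr_n M (S N)) by (auto; lia). simpl pred.
  replace (sum_f_R0 a N + Series (fun k => a (S N + k)%nat) - sum_f_R0 a N)
    with (Series (fun k => a (S N + k)%nat)) by ring.
  replace (sum_f_R0 M N + Series (fun k => M (S N + k)%nat) - sum_f_R0 M N)
    with (Series (fun k => M (S N + k)%nat)) by ring.
  assert (HMt : ex_series (fun k => M (S N + k)%nat)) by (apply ex_series_incr_n; auto).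
  eapply Rle_trans; [apply Series_Rabs|].
  - apply (ex_series_dom _ (fun k => M (S N + k)%nat)); auto. intros n. rewrite Rabs_Rabsolu. auto.
  - apply Series_le; auto. intros n. split; [apply Rabs_pos|auto].
Qed.

Lemma fin_sum_diff (a b : nat -> R) N c : (forall i, (i <= N)%nat -> Rabs (a i - b i) <= c) ->
  Rabs (sum_f_R0 a N - sum_f_R0 b N) <= INR (S N) * c.
Proof.
  intros H. induction N as [|N IH].
  - simpl. rewrite Rmult_1_l. apply H; lia.
  - rewrite !tech5. replace (sum_f_R0 a N + a (S N) - (sum_f_R0 b N + b (S N)))
      with ((sum_f_R0 a N - sum_f_R0 b N) + (a (S N) - b (S N))) by ring.
    eapply Rle_trans; [apply Rabs_triang|].
    rewrite (S_INR (S N)). specialize (IH (fun i Hi => H i ltac:(lia))).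
    pose proof (H (S N) (le_n _)). lra.
Qed.

Lemma fin_delta (u : nat -> R -> R) (L : nat -> R) :
  (forall n eps, 0 < eps -> exists dn, 0 < dn /\ forall h, h <> 0 -> Rabs h < dn -> Rabs (u n h - L n) < eps) ->
  forall N eps, 0 < eps -> exists dl, 0 < dl /\ forall h, h <> 0 -> Rabs h < dl ->
    forall n, (n <= N)%nat -> Rabs (u n h - L n) < eps.
Proof.
  intros H N eps Heps. induction N as [|N IH].
  - destruct (H 0%nat eps Heps) as [dn [Hdn Hh]]. exists dn. split; auto.
    intros h H0 H1 n Hn. replace n with 0%nat by lia. auto.
  - destruct IH as [d1 [Hd1 H1]]. destruct (H (S N) eps Heps) as [d2 [Hd2 H2]].
    exists (Rmin d1 d2). split; [apply Rmin_pos; auto|].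
    intros h Hh0 Hh n Hn. destruct (Nat.eq_dec n (S N)) as [->|Hne].
    + apply H2; auto. eapply Rlt_le_trans; [exact Hh|apply Rmin_r].
    + apply H1; auto; [|lia]. eapply Rlt_le_trans; [exact Hh|apply Rmin_l].
Qed.

Lemma lim_bound (u : nat -> R -> R) (L M : nat -> R) (del : R) :
  0 < del ->
  (forall n h, h <> 0 -> Rabs h < del -> Rabs (u n h) <= M n) ->
  (forall n eps, 0 < eps -> exists dn, 0 < dn /\ forall h, h <> 0 -> Rabs h < dn -> Rabs (u n h - L n) < eps) ->
  forall n, Rabs (L n) <= M n.
Proof.
  intros Hdel HM HL n. apply le_epsilon. intros eps Heps.
  destruct (HL n eps Heps) as [dn [Hdn Hh]].
  set (h := Rmin del dn / 2).
  assert (Hm : 0 < Rmin del dn) by (apply Rmin_pos; auto).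
  assert (Hh0 : h <> 0) by (unfold h; lra).
  assert (Hha : Rabs h = h) by (apply Rabs_right; unfold h; lra).
  assert (Hd1 : Rabs h < del) by (rewrite Hha; unfold h; pose proof (Rmin_l del dn); lra).
  assert (Hd2 : Rabs h < dn) by (rewrite Hha; unfold h; pose proof (Rmin_r del dn); lra).
  specialize (HM n h Hh0 Hd1). specialize (Hh h Hh0 Hd2).
  replace (L n) with (u n h - (u n h - L n)) by ring.
  eapply Rle_trans; [apply Rabs_triang|]. rewrite Rabs_Ropp. lra.
Qed.

Lemma tannery (u : nat -> R -> R) (L M : nat -> R) (del : R) :
  0 < del ->
  (forall n h, h <> 0 -> Rabs h < del -> Rabs (u n h) <= M n) ->
  ex_series M ->
  (forall n eps, 0 < eps -> exists dn, 0 < dn /\ forall h, h <> 0 -> Rabs h < dn -> Rabs (u n h - L n) < eps) ->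
  forall eps, 0 < eps -> exists d', 0 < d' /\ forall h, h <> 0 -> Rabs h < d' ->
     Rabs (Series (fun n => u n h) - Series L) < eps.
Proof.
  intros Hdel HM HMs HL eps Heps.
  assert (HLM := lim_bound u L M del Hdel HM HL).
  assert (HcvM : Un_cv (sum_f_R0 M) (Series M)).
  { apply is_series_Reals. apply Series_correct. auto. }
  destruct (HcvM (eps / 3) ltac:(lra)) as [N HN]. specialize (HN N (le_n _)).
  unfold R_dist in HN.
  destruct (fin_delta u L HL N (eps / 3 / INR (S N))) as [dl [Hdl Hfin]].
  { apply Rdiv_lt_0_compat; [lra|apply lt_0_INR; lia]. }
  exists (Rmin del dl). split; [apply Rmin_pos; auto|].
  intros h Hh0 Hh.
  assert (Hhd : Rabs h < del) by (eapply Rlt_le_trans; [exact Hh|apply Rmin_l]).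
  assert (Hhl : Rabs h < dl) by (eapply Rlt_le_trans; [exact Hh|apply Rmin_r]).
  pose proof (tail_bound (fun n => u n h) M N (fun n => HM n h Hh0 Hhd) HMs) as T1.
  pose proof (tail_bound L M N HLM HMs) as T2.
  pose proof (fin_sum_diff (fun n => u n h) L N (eps / 3 / INR (S N))
    (fun i Hi => Rlt_le _ _ (Hfin h Hh0 Hhl i Hi))) as T3.
  replace (INR (S N) * (eps / 3 / INR (S N))) with (eps / 3) in T3
    by (field; apply not_0_INR; lia).
  replace (Series (fun n => u n h) - Series L) with
    ((Series (fun n => u n h) - sum_f_R0 (fun n => u n h) N) - (Series L - sum_f_R0 L N)
     + (sum_f_R0 (fun n => u n h) N - sum_f_R0 L N)) by ring.
  eapply Rle_lt_trans; [apply Rabs_triang|].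
  eapply Rle_lt_trans; [apply Rplus_le_compat_r; apply Rabs_triang|].
  rewrite Rabs_Ropp.
  assert (Series M - sum_f_R0 M N < eps / 3) by (apply Rabs_def2 in HN; lra).
  lra.
Qed.


Lemma pow_bern d y : 0 <= y -> INR d * y <= 1 -> (1 + y) ^ d * (1 - INR d * y) <= 1.
Proof.
  intros Hy Hdy. induction d as [|d IH].
  - simpl. lra.
  - rewrite S_INR in *. assert (0 <= INR d) by apply pos_INR.
    assert (IH' : (1 + y) ^ d * (1 - INR d * y) <= 1) by (apply IH; nra).
    assert (0 <= (1 + y) ^ d) by (apply pow_le; lra).
    simpl. assert ((1 + y) * (1 - (INR d + 1) * y) <= 1 - INR d * y) by nra.
    assert ((1 + y) ^ d * ((1 + y) * (1 - (INR d + 1) * y)) <= (1 + y) ^ d * (1 - INR d * y))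
      by (apply Rmult_le_compat_l; auto).
    nra.
Qed.

Lemma lin_geom n s : 0 <= s < 1 -> (INR n + 1) * s ^ n <= / (1 - s).
Proof.
  intros Hs.
  assert (E : sum_f_R0 (fun k => s ^ k) n = (1 - s ^ S n) / (1 - s)) by (apply tech3; lra).
  assert (Hle : sum_f_R0 (fun _ => s ^ n) n <= sum_f_R0 (fun k => s ^ k) n).
  { apply sum_Rle. intros k Hk.
    replace n with (k + (n - k))%nat at 1 by lia. rewrite pow_add.
    assert (0 <= s ^ k) by (apply pow_le; lra).
    assert (s ^ (n - k) <= 1) by (rewrite <- (pow1 (n - k)); apply pow_incr; lra).
    nra. }
  rewrite sum_cte, E in Hle. rewrite S_INR in Hle.
  assert (0 <= s ^ S n) by (apply pow_le; lra).
  assert ((1 - s ^ S n) / (1 - s) <= / (1 - s)).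
  { unfold Rdiv. rewrite <- (Rmult_1_l (/ (1 - s))) at 2. apply Rmult_le_compat_r.
    - left; apply Rinv_0_lt_compat; lra.
    - lra. }
  lra.
Qed.

Lemma ex_series_lin (C : R) : ex_series (fun n => C * (INR n + 1) * (49 / 64) ^ n).
Proof.
  apply (ex_series_dom _ (fun n => Rabs C * 8 * (7 / 8) ^ n)).
  - intros n. rewrite !Rabs_mult. rewrite (Rabs_right (INR n + 1)) by (pose proof (pos_INR n); lra).
    rewrite (Rabs_right ((49/64)^n)) by (apply Rle_ge, pow_le; lra).
    replace (49 / 64) with ((7 / 8) * (7 / 8)) by lra. rewrite Rpow_mult_distr.
    pose proof (lin_geom n (7/8) ltac:(lra)).
    replace (/ (1 - 7 / 8)) with 8 in H by (field).
    assert (0 <= (7/8) ^ n) by (apply pow_le; lra).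
    assert (0 <= Rabs C) by apply Rabs_pos.
    assert ((INR n + 1) * ((7 / 8) ^ n * (7 / 8) ^ n) <= 8 * (7/8)^n) by nra.
    nra.
  - apply (ex_series_scal_l (Rabs C * 8) (fun n => (7/8)^n)). apply ex_series_geom.
    rewrite Rabs_right; lra.
Qed.

Lemma F_eq d q x : ex_series (fun n => Fterm d q x n) -> F d q x = Series (fun n => Fterm d q x n).
Proof.
  intros Hex. unfold F.
  assert (Hs : infinite_sum (Fterm d q x) (Series (fun n => Fterm d q x n))).
  { apply is_series_Reals. apply Series_correct. auto. }
  assert (HP := epsilon_spec (inhabits 0) (fun l => infinite_sum (Fterm d q x) l)
     (ex_intro _ _ Hs)). simpl in HP.
  eapply uniqueness_sum; eauto.
Qed.

Definition Lt d x n : R :=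
  let w := digit d x (S n) in let s := digsum d x n in
  (dgeom 1 w * beta d * q0 d ^ S n + INR w * (INR (S n) * q0 d ^ n))
  + INR w * q0 d ^ S n * (INR s * beta d).

Lemma Fterm_deriv d x n : (1 <= d)%nat ->
  derivable_pt_lim (fun q => Fterm d q x n) (q0 d) (Lt d x n).
Proof.
  intros Hd. unfold Fterm.
  set (w := digit d x (S n)). set (s := digsum d x n).
  assert (H1 : derivable_pt_lim (comp (fun b => geom_part b w) (bq d)) (q0 d) (dgeom (bq d (q0 d)) w * beta d))
    by (apply derivable_pt_lim_comp; [apply b_deriv; auto|apply geom_deriv]).
  assert (H2 : derivable_pt_lim (fun q => q ^ S n) (q0 d) (INR (S n) * q0 d ^ pred (S n)))
    by apply derivable_pt_lim_pow.
  assert (H3 : derivable_pt_lim (comp (fun y => y ^ s) (bq d)) (q0 d)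
     (INR s * bq d (q0 d) ^ pred s * beta d))
    by (apply derivable_pt_lim_comp; [apply b_deriv; auto|apply derivable_pt_lim_pow]).
  pose proof (derivable_pt_lim_mult _ _ _ _ _ (derivable_pt_lim_mult _ _ _ _ _ H1 H2) H3) as H.
  replace (Lt d x n) with
   ((dgeom (bq d (q0 d)) w * beta d * (fun q => q ^ S n) (q0 d) +
     comp (fun b => geom_part b w) (bq d) (q0 d) * (INR (S n) * q0 d ^ pred (S n))) *
    comp (fun y => y ^ s) (bq d) (q0 d) +
    (comp (fun b => geom_part b w) (bq d) * (fun q => q ^ S n))%F (q0 d) *
    (INR s * bq d (q0 d) ^ pred s * beta d)).
  - exact H.
  - unfold Lt, comp, mult_fct. fold w s. rewrite b_q0, geom_part_1, !pow1 by auto. simpl pred. ring.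
Qed.

Lemma ex_series_plus_R (a b : nat -> R) : ex_series a -> ex_series b -> ex_series (fun n => a n + b n).
Proof. intros Ha Hb. exact (ex_series_plus a b Ha Hb). Qed.
Lemma ex_series_ext_R (a b : nat -> R) : (forall n, a n = b n) -> ex_series a -> ex_series b.
Proof. intros H Ha. exact (ex_series_ext a b H Ha). Qed.
Lemma ex_series_scal_R (c : R) (a : nat -> R) : ex_series a -> ex_series (fun n => c * a n).
Proof. intros Ha. exact (ex_series_scal_l c a Ha). Qed.

Lemma Fterm_q0 d x n : (1 <= d)%nat ->
  Fterm d (q0 d) x n = INR (digit d x (S n)) * q0 d ^ S n * 1.
Proof. intros Hd. unfold Fterm. rewrite b_q0, geom_part_1, pow1 by auto. reflexivity. Qed.

Lemma part1 d x : (1 <= d)%nat -> 0 <= x <= 1 ->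
  derivable_pt_lim (fun q => F d q x) (q0 d) (Series (Lt d x)).
Proof.
  intros Hd Hx.
  pose proof (q0_pos d) as Hq0. pose proof (q0_le d Hd) as Hq0'.
  set (z := q0 d) in *.
  set (K := 2 / (z * z)).
  assert (HK : 0 <= K) by (unfold K; apply Rmult_le_pos; [lra|left; apply Rinv_0_lt_compat; nra]).
  assert (Hd0 : 1 <= INR d) by (replace 1 with (INR 1) by reflexivity; apply le_INR; auto).
  set (C := 2 * INR d * INR d * K + INR d).
  set (M := fun n => C * (INR n + 1) * (49 / 64) ^ n).
  set (del := Rmin (z / 2) (/ (8 * (1 + INR d * K)))).
  assert (HdK : 0 < 8 * (1 + INR d * K)) by nra.
  assert (Hdel : 0 < del) by (apply Rmin_pos; [lra|apply Rinv_0_lt_compat; auto]).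
  assert (Hdel1 : del <= z / 2) by apply Rmin_l.
  assert (Hdel2 : del * (8 * (1 + INR d * K)) <= 1).
  { apply Rle_trans with (/ (8 * (1 + INR d * K)) * (8 * (1 + INR d * K))).
    - apply Rmult_le_compat_r; [lra|apply Rmin_r].
    - right. field. lra. }
  set (u := fun n h => / h * (Fterm d (z + h) x n - Fterm d z x n)).
  assert (HM : forall n h, h <> 0 -> Rabs h < del -> Rabs (u n h) <= M n).
  { intros n h Hh0 Hh.
    pose proof (Rabs_def2 _ _ Hh) as [Hh1 Hh2].
    set (q := z + h).
    assert (Hq : 0 < q < 1) by (unfold q; lra).
    set (b := bq d q). assert (Hb : 0 < b) by (apply bq_pos; auto).
    assert (Hlip : Rabs (b - 1) <= K * Rabs (q - z)).
    { eapply Rle_trans; [apply b_lip; auto|]. fold z.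
      replace (/ q - / z) with ((z - q) * / (q * z)) by (field; lra).
      rewrite Rabs_mult, (Rabs_right (/ (q * z))) by (apply Rle_ge; left; apply Rinv_0_lt_compat; nra).
      rewrite <- Rabs_Ropp, Ropp_minus_distr, Rmult_comm. apply Rmult_le_compat_r; [apply Rabs_pos|].
      apply Rle_trans with (/ (z / 2 * z)).
      - apply Rinv_le_contravar; [nra|]. unfold q. nra.
      - right. unfold K. field. lra. }
    assert (Hqz : Rabs (q - z) = Rabs h) by (unfold q; f_equal; ring).
    set (B := Rmax 1 b). set (Q := Rmax q z).
    assert (HB1 : 1 <= B) by apply Rmax_l.
    assert (HbB : b <= B) by apply Rmax_r.
    assert (HBle : B <= 1 + K * del).
    { unfold B. apply Rmax_lub; [nra|]. rewrite Hqz in Hlip. pose proof (Rle_abs (b - 1)) as Hab.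
      assert (K * Rabs h <= K * del) by (apply Rmult_le_compat_l; lra). lra. }
    assert (Hy : INR d * (K * del) <= 1 / 8) by nra.
    pose proof (pow_bern d (K * del) ltac:(nra) ltac:(lra)) as Hbern.
    assert (HBd : B ^ d <= 8 / 7).
    { assert (B ^ d <= (1 + K * del) ^ d) by (apply pow_incr; lra).
      assert (0 <= (1 + K * del) ^ d) by (apply pow_le; nra). nra. }
    assert (HQ : Q <= 5 / 8).
    { unfold Q. apply Rmax_lub; [unfold q|]; nra. }
    assert (HQz : z <= Q) by apply Rmax_r.
    assert (HqQ : q <= Q) by apply Rmax_l.
    assert (HBd0 : 0 <= B ^ d) by (apply pow_le; lra).
    assert (Hrho : Q * B ^ d <= 49 / 64) by nra.
    pose proof (term_bound d n (digit d x (S n)) (digsum d x n) q z b K Q B (49/64)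
      (digit_le d x (S n) Hx ltac:(lia)) (digsum_le d x n Hx) ltac:(lra) Hq0 HqQ HQz ltac:(lra)
      ltac:(lra) HB1 ltac:(lra) Hrho HK Hlip) as Hterm.
    unfold u. rewrite Fterm_q0 by auto. fold z q.
    unfold Fterm in *. fold b. rewrite Hqz in Hterm.
    rewrite Rabs_mult, Rabs_Rinv by auto.
    apply (Rmult_le_reg_l (Rabs h)); [apply Rabs_pos_lt; auto|].
    rewrite <- Rmult_assoc, Rinv_r, Rmult_1_l by (apply Rabs_no_R0; auto).
    exact Hterm. }
  assert (HL : forall n eps, 0 < eps -> exists dn, 0 < dn /\ forall h, h <> 0 -> Rabs h < dn ->
     Rabs (u n h - Lt d x n) < eps).
  { intros n eps Heps. destruct (Fterm_deriv d x n Hd eps Heps) as [dl Hdl].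
    exists dl. split; [apply cond_pos|]. intros h Hh0 Hh. unfold u.
    rewrite Rmult_comm. apply Hdl; auto. }
  assert (HMs : ex_series M) by apply ex_series_lin.
  assert (Hz_ex : ex_series (fun n => Fterm d z x n)).
  { apply (ex_series_dom _ M); auto. intros n. rewrite Fterm_q0 by auto. unfold M.
    rewrite Rmult_1_r, Rabs_mult, !Rabs_right; try (apply Rle_ge; try apply pos_INR; apply pow_le; lra).
    assert (Hw : INR (digit d x (S n)) <= INR d) by (apply le_INR, digit_le; auto; lia).
    assert (Hzp : z ^ S n <= (49 / 64) ^ n).
    { simpl. apply Rle_trans with (z ^ n). 
      - assert (0 <= z ^ n) by (apply pow_le; lra). nra.
      - apply pow_incr; lra. }
    assert (0 <= (49/64)^n) by (apply pow_le; lra).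
    assert (INR d <= C * (INR n + 1)).
    { unfold C. pose proof (pos_INR n). assert (0 <= 2 * INR d * INR d * K) by (apply Rmult_le_pos; [nra|exact HK]).
      assert (0 <= (2 * INR d * INR d * K) * (INR n + 1)) by (apply Rmult_le_pos; lra).
      assert (0 <= INR d * INR n) by nra. lra. }
    assert (0 <= INR (digit d x (S n))) by apply pos_INR.
    fold z. apply Rmult_le_compat; try lra; try (apply pow_le; lra). all: apply Rle_ge, pow_le; fold z; lra. }
  intros eps Heps.
  destruct (tannery u (Lt d x) M del Hdel HM HMs HL eps Heps) as [d' [Hd' Ht]].
  exists (mkposreal (Rmin d' del) ltac:(apply Rmin_pos; auto)). simpl.
  intros h Hh0 Hh.
  assert (Hh1 : Rabs h < d') by (eapply Rlt_le_trans; [exact Hh|apply Rmin_l]).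
  assert (Hh2 : Rabs h < del) by (eapply Rlt_le_trans; [exact Hh|apply Rmin_r]).
  assert (Hu_ex : ex_series (fun n => u n h)) by (apply (ex_series_dom _ M); auto).
  assert (Hq_ex : ex_series (fun n => Fterm d (z + h) x n)).
  { apply (ex_series_ext_R (fun n => Fterm d z x n + h * u n h)).
    - intros n. unfold u. field. auto.
    - apply ex_series_plus_R; auto. apply ex_series_scal_R; auto. }
  rewrite (F_eq d (z + h) x Hq_ex), (F_eq d z x Hz_ex).
  replace ((Series (fun n => Fterm d (z + h) x n) - Series (fun n => Fterm d z x n)) / h)
    with (Series (fun n => u n h)).
  - apply Ht; auto.
  - unfold u. rewrite Series_scal_l, Series_minus by auto. unfold Rdiv. apply Rmult_comm.
Qed.


Lemma lead_alg (dd W x : R) : 1 <= dd -> 0 <= W <= dd ->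
  W / (dd + 1) <= x <= (W + 1) / (dd + 1) ->
  Rabs (W * (W - 1) / 2 * (- 2 * (dd + 1) / dd) * / (dd + 1) * / (dd + 1) + W / (dd + 1) - x * (1 - x))
    <= 4 / dd.
Proof.
  intros Hd HW Hx.
  pose (y := W / (dd + 1)).
  assert (HWy : W = y * (dd + 1)) by (unfold y; field; lra).
  clearbody y. subst W.
  replace (y * (dd + 1) / (dd + 1)) with y in Hx by (field; lra).
  replace ((y * (dd + 1) + 1) / (dd + 1)) with (y + / (dd + 1)) in Hx by (field; lra).
  rename Hx into Hxy.
  assert (Hy0 : 0 <= y) by nra.
  assert (E : y * (dd + 1) * (y * (dd + 1) - 1) / 2 * (- 2 * (dd + 1) / dd) * / (dd + 1) * / (dd + 1) + y * (dd + 1) / (dd + 1) - x * (1 - x)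
     = ((y - x) * dd - (y * y - x * x) * dd + (y - y * y)) / dd).
  { field. lra. }
  rewrite E. unfold Rdiv. rewrite Rabs_mult, (Rabs_right (/ dd)) by (apply Rle_ge; left; apply Rinv_0_lt_compat; lra).
  apply Rmult_le_compat_r; [left; apply Rinv_0_lt_compat; lra|].
  set (e := x - y).
  assert (He : 0 <= e) by (unfold e; lra).
  assert (Hed : e * (dd + 1) <= 1).
  { unfold e. destruct Hxy as [_ H2]. apply (Rmult_le_compat_r (dd + 1)) in H2; [|lra].
    rewrite Rmult_plus_distr_r, Rinv_l in H2 by lra. lra. }
  assert (Hy1' : y <= 1) by nra.
  assert (Hx1 : x <= 1 + e) by (unfold e; lra).
  replace ((y - x) * dd - (y * y - x * x) * dd + (y - y * y))
    with (- (e * dd) + e * dd * (2 * y + e) + y * (1 - y)) by (unfold e; ring).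
  assert (0 <= e * dd <= 1) by nra.
  assert (0 <= y * (1 - y) <= 1) by nra.
  assert (0 <= e <= 1) by nra.
  assert (0 <= e * dd * (2 * y + e) <= 3) by nra.
  apply Rabs_le. lra.
Qed.

Lemma z_d d : q0 d * (INR d + 1) = 1.
Proof. unfold q0. rewrite S_INR. field. pose proof (pos_INR d). lra. Qed.

Lemma Lt_bound d x n : (1 <= d)%nat -> 0 <= x <= 1 ->
  Rabs (Lt d x n) <= 7 * INR d * (INR n + 1) * q0 d ^ n.
Proof.
  intros Hd Hx. unfold Lt, beta. rewrite dgeom_1.
  pose proof (z_d d) as Hz. pose proof (q0_pos d) as Hz0.
  set (z := q0 d) in *.
  assert (Hw : INR (digit d x (S n)) <= INR d) by (apply le_INR, digit_le; auto; lia).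
  assert (Hs : INR (digsum d x n) <= INR d * INR n) by (rewrite <- mult_INR; apply le_INR, digsum_le; auto).
  set (W := INR (digit d x (S n))) in *. set (s := INR (digsum d x n)) in *.
  assert (HW0 : 0 <= W) by apply pos_INR. assert (Hs0 : 0 <= s) by apply pos_INR.
  assert (Hd1 : 1 <= INR d) by (replace 1 with (INR 1) by reflexivity; apply le_INR; auto).
  assert (HWW : 0 <= W * (W - 1)).
  { unfold W. destruct (digit d x (S n)) as [|k]; [simpl; lra|].
    rewrite S_INR. pose proof (pos_INR k). nra. }
  assert (Hn0 : 0 <= INR n) by apply pos_INR.
  set (P := z ^ n). assert (HP : 0 <= P) by (apply pow_le; lra).
  assert (HzP : z ^ S n = z * P) by reflexivity. rewrite HzP.
  rewrite S_INR.
  set (bb := - 2 * (INR d + 1) / INR d).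
  assert (Hbb : Rabs bb <= 4).
  { unfold bb. rewrite Rabs_left1.
    - apply (Rmult_le_reg_r (INR d)); [lra|]. unfold Rdiv. field_simplify; lra.
    - unfold Rdiv. assert (0 < / INR d) by (apply Rinv_0_lt_compat; lra). nra. }
  eapply Rle_trans; [apply Rabs_triang|].
  eapply Rle_trans; [apply Rplus_le_compat_r, Rabs_triang|].
  rewrite !Rabs_mult.
  rewrite (Rabs_right (W * (W - 1) / 2)) by (apply Rle_ge; lra).
  rewrite (Rabs_right W), (Rabs_right z), (Rabs_right P), (Rabs_right s), (Rabs_right (INR (S n))) by (try apply Rle_ge, pos_INR; lra). rewrite (S_INR n).
  assert (Hdz : INR d * z <= 1) by nra.
  assert (A1 : W * (W - 1) / 2 * Rabs bb * (z * P) <= 2 * INR d * P).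
  { assert (W * (W - 1) <= INR d * INR d) by nra.
    assert (W * (W - 1) / 2 * Rabs bb <= 2 * INR d * INR d) by nra.
    assert (0 <= W * (W - 1) / 2 * Rabs bb) by (pose proof (Rabs_pos bb); nra).
    assert (INR d * INR d * z <= INR d) by nra.
    assert (W * (W - 1) / 2 * Rabs bb * z <= 2 * INR d * INR d * z) by (apply Rmult_le_compat_r; lra).
    replace (W * (W - 1) / 2 * Rabs bb * (z * P)) with ((W * (W - 1) / 2 * Rabs bb * z) * P) by ring.
    apply Rmult_le_compat_r; lra. }
  assert (A2 : W * ((INR n + 1) * P) <= INR d * (INR n + 1) * P).
  { assert (0 <= (INR n + 1) * P) by nra. rewrite Rmult_assoc. apply Rmult_le_compat_r; lra. }
  assert (A3 : W * (z * P) * (s * Rabs bb) <= 4 * INR d * INR n * P).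
  { assert (s * Rabs bb <= INR d * INR n * 4) by (pose proof (Rabs_pos bb); nra).
    assert (W * z <= 1) by nra.
    assert (0 <= s * Rabs bb) by (pose proof (Rabs_pos bb); nra).
    assert (W * z * (s * Rabs bb) <= 1 * (INR d * INR n * 4)) by (apply Rmult_le_compat; nra).
    replace (W * (z * P) * (s * Rabs bb)) with ((W * z * (s * Rabs bb)) * P) by ring.
    replace (4 * INR d * INR n * P) with ((1 * (INR d * INR n * 4)) * P) by ring.
    apply Rmult_le_compat_r; lra. }
  assert (0 <= INR d * INR n * P) by (apply Rmult_le_pos; nra).
  assert (0 <= INR d * P) by nra.
  replace (7 * INR d * (INR n + 1) * P) with (2 * INR d * P + INR d * (INR n + 1) * P + 4 * INR d * INR n * P + (2 * (INR d * INR n * P) + 4 * (INR d * P))) by ring.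
  lra.
Qed.

Lemma part2 d x : (3 <= d)%nat -> 0 <= x <= 1 ->
  Rabs (q0 d * Series (Lt d x) - x * (1 - x)) <= 61 / INR d.
Proof.
  intros Hd Hx. assert (Hd1 : (1 <= d)%nat) by lia.
  pose proof (z_d d) as Hz. pose proof (q0_pos d) as Hz0.
  assert (Hd3 : 3 <= INR d) by (replace 3 with (INR 3) by (simpl; lra); apply le_INR; auto).
  assert (Hz4 : q0 d <= / 4).
  { apply (Rmult_le_reg_r 4); [lra|]. rewrite Rinv_l by lra. nra. }
  assert (Hex : ex_series (Lt d x)).
  { apply (ex_series_dom _ (fun n => (7 * INR d) * (INR n + 1) * (49 / 64) ^ n)).
    - intros n. eapply Rle_trans; [apply Lt_bound; auto|].
      apply Rmult_le_compat_l; [apply Rmult_le_pos; [lra|pose proof (pos_INR n); lra]|].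
      apply pow_incr; lra.
    - apply ex_series_lin. }
  rewrite Series_incr_1 by auto.
  set (z := q0 d) in *.
  assert (Hb : forall k, Rabs (z * Lt d x (S k)) <= 28 * z * (/ 2) ^ k).
  { intros k. rewrite Rabs_mult, (Rabs_right z) by lra.
    pose proof (Lt_bound d x (S k) Hd1 Hx) as HL. fold z in HL.
    rewrite S_INR in HL.
    assert (Hk : 0 <= INR k) by apply pos_INR.
    assert (Hzk : z ^ S k <= z * (/ 4) ^ k) by (simpl; apply Rmult_le_compat_l; [lra|apply pow_incr; lra]).
    pose proof (lin_geom k (/ 2) ltac:(lra)) as Hg.
    replace (/ (1 - / 2)) with 2 in Hg by field.
    replace (/ 4) with (/ 2 * / 2) in Hzk by field. rewrite Rpow_mult_distr in Hzk.
    assert (H2 : 0 <= (/ 2) ^ k) by (apply pow_le; lra).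
    assert (Hdz : INR d * z <= 1) by nra.
    assert (HzS : 0 <= z ^ S k) by (apply pow_le; lra).
    assert (E1 : z * Rabs (Lt d x (S k)) <= 7 * (INR k + 1 + 1) * z ^ S k).
    { apply Rle_trans with (z * (7 * INR d * (INR k + 1 + 1) * z ^ S k)).
      - apply Rmult_le_compat_l; lra.
      - replace (z * (7 * INR d * (INR k + 1 + 1) * z ^ S k)) with ((INR d * z) * (7 * (INR k + 1 + 1) * z ^ S k)) by ring.
        rewrite <- (Rmult_1_l (7 * (INR k + 1 + 1) * z ^ S k)) at 2.
        apply Rmult_le_compat_r; [|lra]. apply Rmult_le_pos; [lra|auto]. }
    assert (E2 : 7 * (INR k + 1 + 1) * z ^ S k <= 14 * (INR k + 1) * (z * ((/ 2) ^ k * (/ 2) ^ k))).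
    { assert (7 * (INR k + 1 + 1) <= 14 * (INR k + 1)) by lra.
      apply Rle_trans with (14 * (INR k + 1) * z ^ S k).
      - apply Rmult_le_compat_r; auto.
      - apply Rmult_le_compat_l; lra. }
    assert (E3 : 14 * (INR k + 1) * (z * ((/ 2) ^ k * (/ 2) ^ k)) <= 28 * z * (/ 2) ^ k).
    { replace (14 * (INR k + 1) * (z * ((/ 2) ^ k * (/ 2) ^ k))) with
        (14 * z * (/ 2) ^ k * ((INR k + 1) * (/ 2) ^ k)) by ring.
      replace (28 * z * (/ 2) ^ k) with (14 * z * (/ 2) ^ k * 2) by ring.
      apply Rmult_le_compat_l; [|auto]. apply Rmult_le_pos; lra. }
    lra. }
  assert (Hgeo : ex_series (fun k => 28 * z * (/ 2) ^ k)).
  { apply ex_series_scal_R. apply ex_series_geom. rewrite Rabs_right; lra. }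
  assert (Htail : Rabs (z * Series (fun k => Lt d x (S k))) <= 56 * z).
  { rewrite <- Series_scal_l.
    eapply Rle_trans; [apply Series_Rabs|].
    - apply (ex_series_dom _ _ (fun k => Rle_trans _ _ _ (Req_le _ _ (Rabs_Rabsolu _)) (Hb k)) Hgeo).
    - eapply Rle_trans; [apply Series_le; [|exact Hgeo]|].
      + intros k. split; [apply Rabs_pos|apply Hb].
      + rewrite Series_scal_l, Series_geom by (rewrite Rabs_right; lra). lra. }
  pose proof (digit1 d x Hx) as Hdig. fold z in Hdig.
  assert (HW : INR (digit d x 1) <= INR d) by (apply le_INR, digit_le; auto).
  assert (Hlead : Rabs (z * Lt d x 0 - x * (1 - x)) <= 4 / INR d).
  { assert (E : z * Lt d x 0 = INR (digit d x 1) * (INR (digit d x 1) - 1) / 2 * (- 2 * (INR d + 1) / INR d)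
       * / (INR d + 1) * / (INR d + 1) + INR (digit d x 1) / (INR d + 1)).
    { unfold Lt, beta. rewrite dgeom_1. unfold z, q0. rewrite !S_INR. simpl digsum. simpl INR.
      field. lra. }
    rewrite E. apply lead_alg; [lra|split; [apply pos_INR|auto]|].
    unfold z, q0 in Hdig. rewrite S_INR in Hdig. unfold Rdiv. lra. }
  replace (z * (Lt d x 0 + Series (fun k => Lt d x (S k))) - x * (1 - x))
    with ((z * Lt d x 0 - x * (1 - x)) + z * Series (fun k => Lt d x (S k))) by ring.
  eapply Rle_trans; [apply Rabs_triang|].
  assert (56 * z <= 56 / INR d).
  { unfold Rdiv. apply Rmult_le_compat_l; [lra|].
    apply (Rmult_le_reg_r (INR d)); [lra|]. rewrite Rinv_l by lra. nra. }
  assert (4 / INR d + 56 / INR d = 60 / INR d) by (field; lra).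
  assert (60 / INR d <= 61 / INR d).
  { unfold Rdiv. apply Rmult_le_compat_r; [left; apply Rinv_0_lt_compat; lra|lra]. }
  lra.
Qed.


Theorem mainTheorem10 :
  exists D : nat -> R -> R,
    (forall (d : nat) (x : R), (1 <= d)%nat -> 0 <= x <= 1 ->
       derivable_pt_lim (fun q => F d q x) (/ INR (S d)) (D d x)) /\
    (forall eps : R, eps > 0 ->
       exists N : nat, forall (d : nat), (1 <= d)%nat -> (N <= d)%nat ->
         forall x : R, 0 <= x <= 1 ->
           Rabs (/ INR (S d) * D d x - x * (1 - x)) <= eps).
Proof.
  exists (fun d x => Series (Lt d x)). split.
  - intros d x Hd Hx. exact (part1 d x Hd Hx).
  - intros eps Heps. destruct (INR_archimed eps 61 Heps) as [n Hn].
    exists (n + 3)%nat. intros d Hd1 Hnd x Hx.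
    eapply Rle_trans; [exact (part2 d x ltac:(lia) Hx)|].
    assert (Hd3 : 3 <= INR d) by (replace 3 with (INR 3) by (simpl; lra); apply le_INR; lia).
    assert (INR n <= INR d) by (apply le_INR; lia).
    apply (Rmult_le_reg_r (INR d)); [lra|]. unfold Rdiv. rewrite Rmult_assoc, Rinv_l by lra.
    nra.
Qed.
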